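(* Let $d$ be prime, $n\ge 1$, $G$ invertible over $\mathbb Z_d$ with $N=(\det G)^{-1}$, and let $\rho,\sigma$ be $n$-qudit states. Then for all $\vec p,\vec q\in\mathbb Z_d^n$, $$\Xi_{\rho\boxtimes\sigma}(\vec p,\vec q)=\Xi_\rho(Ng_{11}\vec p,\ g_{00}\vec q)\;\Xi_\sigma(-Ng_{10}\vec p,\ g_{01}\vec q).$$
   Context: Fix a prime $d$; on $\mathcal H=\mathbb C^d$, $\chi(k)=e^{2\pi ik/d}$, $X|k\rangle=|k+1\rangle$, $Z|k\rangle=\chi(k)|k\rangle$. Weyl operators: $w(p,q)=\chi(-2^{-1}pq)Z^pX^q$ for odd $d$, $w(p,q)=i^{-pq}Z^pX^q$ for $d=2$, $w(\vec p,\vec q)=\bigotimes_k w(p_k,q_k)$. Characteristic function $\Xi_\rho(\vec p,\vec q)=\mathrm{Tr}[\rho\,w(-\vec p,-\vec q)]$. Let $G=\begin{pmatrix}g_{00}&g_{01}\\ g_{10}&g_{11}\end{pmatrix}$ over $\mathbb Z_d$ with $\det G\not\equiv0$, $N=(\det G)^{-1}$. Key unitary $U$ on $\mathcal H_A\otimes\mathcal H_B$ ($\mathcal H_A=\mathcal H_B=\mathcal H^{\otimes n}$): $U|\vec i\rangle|\vec j\rangle=|Ng_{11}\vec i-Ng_{10}\vec j\rangle|-Ng_{01}\vec i+Ng_{00}\vec j\rangle$. Convolution: $\rho\boxtimes\sigma=\mathrm{Tr}_B[U(\rho\otimes\sigma)U^\dagger]$. *)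

(* Defs.v *)
From HB Require Import structures.
From mathcomp Require Import all_boot all_order all_algebra all_field.
Set Implicit Arguments. Unset Strict Implicit. Unset Printing Implicit Defensive.
Import Order.TTheory GRing.Theory Num.Theory.
Local Open Scope ring_scope.

(* Operators on the Hilbert space with orthonormal basis indexed by a finType T,
   represented by their matrix entries <i|A|j> = A i j. *)
Definition op (T : finType) := T -> T -> algC.

Definition mulop (T : finType) (A B : op T) : op T :=
  fun i j => \sum_k A i k * B k j.
Definition expop (T : finType) (A : op T) (m : nat) : op T :=
  iter m (mulop A) (fun i j => (i == j)%:R).
Definition adjop (T : finType) (A : op T) : op T := fun i j => (A j i)^*.
Definition trop (T : finType) (A : op T) : algC := \sum_i A i i.

Definition psdop (T : finType) (A : op T) : Prop :=
  forall v : T -> algC, 0 <= \sum_i \sum_j (v i)^* * A i j * v j.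
Definition is_state (T : finType) (A : op T) : Prop := psdop A /\ trop A = 1.

(* chi(k) = e^{2 pi i k/d};  d.-root (-1) = e^{i pi/d} (minimal argument). *)
Definition omega (d : nat) : algC := (d.-root (-1)) ^+ 2.
Definition chi (d : nat) (k : 'F_d) : algC := omega d ^+ (k : nat).

Definition Xop (d : nat) : op 'F_d := fun i j => (i == j + 1)%:R.
Definition Zop (d : nat) : op 'F_d := fun i j => (i == j)%:R * chi i.

Definition wphase (d : nat) (p q : 'F_d) : algC :=
  if d == 2%N then ('i ^+ ((p : nat) * (q : nat))%N)^-1
  else chi (- (2%:R)^-1 * p * q).
Definition w1 (d : nat) (p q : 'F_d) : op 'F_d :=
  fun i j => wphase p q * mulop (expop (@Zop d) p) (expop (@Xop d) q) i j.

(* n-qudit space: basis indexed by vectors in Z_d^n *)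
Definition qv (n d : nat) := {ffun 'I_n -> 'F_d}.

(* tensor product of the single-qudit Weyl operators *)
Definition wn (n d : nat) (p q : qv n d) : op (qv n d) :=
  fun i j => \prod_k w1 (p k) (q k) (i k) (j k).

Definition vopp (n d : nat) (p : qv n d) : qv n d := [ffun k => - p k].
Definition vscale (n d : nat) (c : 'F_d) (p : qv n d) : qv n d := [ffun k => c * p k].

Definition Xi (n d : nat) (rho : op (qv n d)) (p q : qv n d) : algC :=
  trop (mulop rho (wn (vopp p) (vopp q))).

Definition tensop (T : finType) (A B : op T) : op (T * T)%type :=
  fun x y => A x.1 y.1 * B x.2 y.2.
Definition ptrB (T : finType) (M : op (T * T)%type) : op T :=
  fun a a' => \sum_b M (a, b) (a', b).

Definition Umap (n d : nat) (g00 g01 g10 g11 : 'F_d) (x : (qv n d * qv n d)%type)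
  : qv n d * qv n d :=
  let N := (g00 * g11 - g01 * g10)^-1 in
  ([ffun k => N * g11 * x.1 k - N * g10 * x.2 k],
   [ffun k => - (N * g01 * x.1 k) + N * g00 * x.2 k]).
Definition Uop (n d : nat) (g00 g01 g10 g11 : 'F_d) : op (qv n d * qv n d)%type :=
  fun x y => (x == Umap g00 g01 g10 g11 y)%:R.

Definition conv (n d : nat) (g00 g01 g10 g11 : 'F_d) (rho sigma : op (qv n d))
  : op (qv n d) :=
  let U := Uop g00 g01 g10 g11 in
  ptrB (mulop (mulop U (tensop rho sigma)) (adjop U)).

(* Main.v *)
Require Import Defs.
From mathcomp Require Import all_boot all_order all_algebra all_field.
From mathcomp Require Import ring.
Import Order.TTheory GRing.Theory Num.Theory.
Local Open Scope ring_scope.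
Set Implicit Arguments. Unset Strict Implicit.

Section S.
Variable d : nat.
Hypothesis hd : prime d.

Lemma omegaX : omega d ^+ d = 1.
Proof.
rewrite /omega -exprM mulnC exprM rootCK ?prime_gt0 //.
by rewrite expr2 mulrNN mulr1.
Qed.

Lemma omega_mod k : omega d ^+ (k %% d) = omega d ^+ k.
Proof.
by rewrite {2}(divn_eq k d) exprD mulnC exprM omegaX expr1n mul1r.
Qed.

Lemma chiD (a b : 'F_d) : chi (a + b) = chi a * chi b.
Proof.
rewrite /chi -exprD /=; move: (a : nat) (b : nat) => x y.
by rewrite Fp_cast // omega_mod.
Qed.

Lemma chi0 : chi (0 : 'F_d) = 1.
Proof. by rewrite /chi /= expr0. Qed.

Lemma chi_sum (I : finType) (F : I -> 'F_d) :
  chi (\sum_i F i) = \prod_i chi (F i).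
Proof. exact: (big_morph _ chiD chi0). Qed.

Lemma chiMn (a : 'F_d) m : chi (a *+ m) = chi a ^+ m.
Proof. by elim: m => [|m IH]; rewrite ?mulr0n ?chi0 ?expr0 // mulrS chiD IH exprS. Qed.


Lemma sum_ind1 (T : finType) (c : T) (F : T -> algC) :
  \sum_k (c == k)%:R * F k = F c.
Proof.
rewrite (bigD1 c) //= eqxx mul1r big1 ?addr0 // => k hk.
by rewrite eq_sym (negbTE hk) mul0r.
Qed.

Lemma sum_ind2 (T : finType) (c : T) (F : T -> algC) :
  \sum_k F k * (k == c)%:R = F c.
Proof.
rewrite (bigD1 c) //= eqxx mulr1 big1 ?addr0 // => k hk.
by rewrite (negbTE hk) mulr0.
Qed.

Lemma expopS (T : finType) (A : op T) m : expop A m.+1 = mulop A (expop A m).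
Proof. by rewrite /expop iterS. Qed.

Lemma expZ m (i j : 'F_d) : expop (@Zop d) m i j = (i == j)%:R * chi i ^+ m.
Proof.
elim: m i j => [|m IH] i j; first by rewrite expr0 mulr1.
rewrite expopS /mulop.
under eq_bigr => k _ do rewrite IH /Zop -mulrA.
by rewrite sum_ind1 mulrCA exprS.
Qed.

Lemma expX m (i j : 'F_d) : expop (@Xop d) m i j = (i == j + m%:R)%:R.
Proof.
elim: m i j => [|m IH] i j; first by rewrite addr0.
rewrite expopS /mulop.
under eq_bigr => k _ do rewrite IH.
by rewrite sum_ind2 /Xop mulrSr addrA.
Qed.

Lemma w1E (p q i j : 'F_d) :
  w1 p q i j = wphase p q * (chi (i * p) * (i == j + q)%:R).
Proof.
rewrite /w1 /mulop; congr (_ * _).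
under eq_bigr => k _ do rewrite expZ expX -mulrA.
have Fn (x : 'F_d) : (x : nat)%:R = x by exact: (natr_Zp x).
rewrite sum_ind1 (Fn q) -chiMn; congr (chi _ * _).
by rewrite -mulr_natr (Fn p).
Qed.

Definition vadd n (x y : qv n d) : qv n d := [ffun k => x k + y k].

Lemma prod_ind n (x y : qv n d) :
  \prod_k ((x k == y k)%:R : algC) = (x == y)%:R.
Proof.
case: eqP => [->|neq]; first by rewrite big1 // => k _; rewrite eqxx.
have [k hk] : exists k, x k != y k.
  apply/existsP; apply: contraNT (introN eqP neq); rewrite negb_exists => /forallP h.
  by apply/eqP/ffunP => k; apply/eqP; move: (h k); rewrite negbK.
by rewrite (bigD1 k) //= (negbTE hk) mul0r.
Qed.

Lemma wnE n (p q i j : qv n d) :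
  wn p q i j = (\prod_k wphase (p k) (q k)) *
               (chi (\sum_k i k * p k) * (i == vadd j q)%:R).
Proof.
rewrite /wn; under eq_bigr => k _ do rewrite w1E.
rewrite !big_split /= chi_sum -prod_ind; congr (_ * (_ * _)).
by apply: eq_bigr => k _; rewrite ffunE.
Qed.

End S.

Section S2.
Variables (d n : nat).
Hypothesis hd : prime d.

Definition PH (p q : qv n d) := \prod_k wphase (p k) (q k).
Definition dot (x y : qv n d) : 'F_d := \sum_k x k * y k.

Lemma XiE (rho : op (qv n d)) p q :
  Xi rho p q = PH (vopp p) (vopp q) *
    \sum_i rho i (vadd i (vopp q)) * chi (dot (vadd i (vopp q)) (vopp p)).
Proof.
rewrite /Xi /trop /mulop mulr_sumr; apply: eq_bigr => i _.
have E : forall j, rho i j * wn (vopp p) (vopp q) j i =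
   (PH (vopp p) (vopp q) * (rho i j * chi (dot j (vopp p)))) * (j == vadd i (vopp q))%:R.
  by move=> j; rewrite (wnE hd) /PH /dot; ring.
under eq_bigr => j _ do rewrite E.
by rewrite sum_ind2 mulrA.
Qed.

Variables g00 g01 g10 g11 : 'F_d.
Hypothesis hG : g00 * g11 - g01 * g10 != 0.
Let N := (g00 * g11 - g01 * g10)^-1.
Lemma hN : N * (g00 * g11 - g01 * g10) = 1.
Proof. exact: mulVf. Qed.

Definition Vmap (x : qv n d * qv n d) : qv n d * qv n d :=
  ([ffun k => g00 * x.1 k + g10 * x.2 k], [ffun k => g01 * x.1 k + g11 * x.2 k]).

Lemma VU x : Vmap (Umap g00 g01 g10 g11 x) = x.
Proof.
case: x => a b; rewrite /Vmap /Umap /=; congr pair; apply/ffunP => k; rewrite !ffunE.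
  transitivity ((N * (g00 * g11 - g01 * g10)) * a k); first by rewrite /N; ring.
  by rewrite hN mul1r.
transitivity ((N * (g00 * g11 - g01 * g10)) * b k); first by rewrite /N; ring.
by rewrite hN mul1r.
Qed.

Lemma UV x : Umap g00 g01 g10 g11 (Vmap x) = x.
Proof.
case: x => a b; rewrite /Vmap /Umap /=; congr pair; apply/ffunP => k; rewrite !ffunE.
  transitivity ((N * (g00 * g11 - g01 * g10)) * a k); first by rewrite /N; ring.
  by rewrite hN mul1r.
transitivity ((N * (g00 * g11 - g01 * g10)) * b k); first by rewrite /N; ring.
by rewrite hN mul1r.
Qed.

Lemma eqUV z x : (z == Umap g00 g01 g10 g11 x) = (Vmap z == x).
Proof. by apply/eqP/eqP => [->|<-]; rewrite ?VU ?UV. Qed.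

Lemma convE (rho sigma : op (qv n d)) a a' :
  conv g00 g01 g10 g11 rho sigma a a' =
  \sum_b rho (Vmap (a, b)).1 (Vmap (a', b)).1 * sigma (Vmap (a, b)).2 (Vmap (a', b)).2.
Proof.
rewrite /conv /ptrB; apply: eq_bigr => b _.
rewrite /mulop /adjop /Uop.
under eq_bigr => y _ do under eq_bigr => x _ do rewrite eqUV.
under eq_bigr => y _ do rewrite sum_ind1 conjC_nat eqUV eq_sym.
by rewrite sum_ind2.
Qed.

End S2.

Lemma F2cases (x : 'F_2) : x = 0 \/ x = 1.
Proof. by case: x => [[|[|m]]] // H; [left|right]; apply: val_inj. Qed.

Lemma wphase_split d (hd : prime d) (a b c1 e1 c2 e2 : 'F_d) :
  c1 * e1 + c2 * e2 = 1 ->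
  wphase a b = wphase (c1 * a) (e1 * b) * wphase (c2 * a) (e2 * b).
Proof.
move=> h; rewrite /wphase; case: eqP => [d2|_].
  subst d.
  have z1 : (0 : 'F_2) != 1 by [].
  case: (F2cases a) => ->; case: (F2cases b) => ->;
  case: (F2cases c1) h => ->; case: (F2cases e1) => ->;
  case: (F2cases c2) => ->; case: (F2cases e2) => ->;
  rewrite ?(mul0r, mulr0, mul1r, mulr1, addr0, add0r) /= => h;
  rewrite ?expr0 ?invr1 ?mul1r ?mulr1 //; try by move: h; apply/eqP.
rewrite -(chiD hd); congr chi.
transitivity ((c1 * e1 + c2 * e2) * (- 2%:R^-1 * a * b)); first by rewrite h mul1r.
ring.
Qed.

Section S3.
Variables (d n : nat).
Hypothesis hd : prime d.
Variables g00 g01 g10 g11 : 'F_d.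
Hypothesis hG : g00 * g11 - g01 * g10 != 0.
Let N := (g00 * g11 - g01 * g10)^-1.
Let hN : N * (g00 * g11 - g01 * g10) = 1.
Proof. exact: mulVf. Qed.
Variables p q : qv n d.

Lemma E1 (w : qv n d * qv n d) :
  (Vmap g00 g01 g10 g11 (vadd (Umap g00 g01 g10 g11 w).1 (vopp q), (Umap g00 g01 g10 g11 w).2)).1
  = vadd w.1 (vopp (vscale g00 q)).
Proof.
case: w => a b; rewrite /Vmap /Umap /=; apply/ffunP => k; rewrite !ffunE.
transitivity ((N * (g00 * g11 - g01 * g10)) * a k - g00 * q k); first by rewrite /N; ring.
by rewrite hN mul1r.
Qed.

Lemma E2 (w : qv n d * qv n d) :
  (Vmap g00 g01 g10 g11 (vadd (Umap g00 g01 g10 g11 w).1 (vopp q), (Umap g00 g01 g10 g11 w).2)).2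
  = vadd w.2 (vopp (vscale g01 q)).
Proof.
case: w => a b; rewrite /Vmap /Umap /=; apply/ffunP => k; rewrite !ffunE.
transitivity ((N * (g00 * g11 - g01 * g10)) * b k - g01 * q k); first by rewrite /N; ring.
by rewrite hN mul1r.
Qed.

Lemma E0 (w : qv n d * qv n d) :
  Vmap g00 g01 g10 g11 ((Umap g00 g01 g10 g11 w).1, (Umap g00 g01 g10 g11 w).2) = w.
Proof. by rewrite -surjective_pairing (VU hG). Qed.

Lemma Echi (w : qv n d * qv n d) :
  dot (vadd (Umap g00 g01 g10 g11 w).1 (vopp q)) (vopp p) =
  dot (vadd w.1 (vopp (vscale g00 q))) (vopp (vscale (N * g11) p)) +
  dot (vadd w.2 (vopp (vscale g01 q))) (vopp (vscale (- (N * g10)) p)).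
Proof.
rewrite /dot -big_split /=; apply: eq_bigr => k _.
case: w => a b; rewrite /Umap /= !ffunE; symmetry.
transitivity ((- (N * g11 * a k * p k) + N * g10 * b k * p k)
   + (N * (g00 * g11 - g01 * g10)) * (q k * p k)); first by rewrite /N; ring.
rewrite hN mul1r /N; ring.
Qed.

Lemma Eph :
  PH (vopp p) (vopp q) =
  PH (vopp (vscale (N * g11) p)) (vopp (vscale g00 q)) *
  PH (vopp (vscale (- (N * g10)) p)) (vopp (vscale g01 q)).
Proof.
rewrite /PH -big_split /=; apply: eq_bigr => k _; rewrite !ffunE.
rewrite (@wphase_split d hd (- p k) (- q k) (N * g11) g00 (- (N * g10)) g01).
  by rewrite !mulrN.
transitivity (N * (g00 * g11 - g01 * g10)); first by rewrite /N; ring.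
exact: hN.
Qed.

End S3.

Unset Implicit Arguments.
Set Strict Implicit.

Theorem mainTheorem7 (d n : nat) (hd : prime d) (hn : (0 < n)%N)
  (g00 g01 g10 g11 : 'F_d) (hG : g00 * g11 - g01 * g10 != 0)
  (rho sigma : op (qv n d)) (hrho : is_state rho) (hsigma : is_state sigma)
  (p q : qv n d) :
  let N := (g00 * g11 - g01 * g10)^-1 in
  Xi (conv g00 g01 g10 g11 rho sigma) p q =
    Xi rho (vscale (N * g11) p) (vscale g00 q) *
    Xi sigma (vscale (- (N * g10)) p) (vscale g01 q).
Proof.
move=> N; rewrite /N !(XiE hd) (Eph hd hG p q) mulrACA; congr (_ * _).
under eq_bigr => a _ do rewrite (convE hG) mulr_suml.
transitivity (\sum_(z : qv n d * qv n d)
   rho (Vmap g00 g01 g10 g11 z).1 (Vmap g00 g01 g10 g11 (vadd z.1 (vopp q), z.2)).1 *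
   sigma (Vmap g00 g01 g10 g11 z).2 (Vmap g00 g01 g10 g11 (vadd z.1 (vopp q), z.2)).2 *
   chi (dot (vadd z.1 (vopp q)) (vopp p))).
  by rewrite pair_bigA.
rewrite (reindex (Umap g00 g01 g10 g11)); last first.
  by apply: onW_bij; exists (Vmap g00 g01 g10 g11); [exact: VU | exact: UV].
under eq_bigr => w _ do rewrite (VU hG) (E1 hG) (E2 hG) (Echi hG) (chiD hd).
symmetry; rewrite big_distrlr /=.
rewrite pair_bigA; apply: eq_bigr => w _ /=; ring.
Qed.
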